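(* Let $|\psi\rangle_{ABC}$ be a three-qubit pure state, each qubit carrying the Hamiltonian $H_A=H_B=H_C=|1\rangle\langle1|$, and let $s=\{A,B,C\}$. If $M^{(s)}_E(|\psi\rangle_{ABC})>\frac12$, then $|\psi\rangle_{ABC}$ is genuinely multipartite entangled, i.e. it is not of the form $|\phi\rangle_{XY}\otimes|\chi\rangle_Z$ for any bipartition $\{X,Y\}|Z$ of $\{A,B,C\}$.
   Context: For a multi-qubit subsystem $X$ the Hamiltonian is $H_X=\sum_{i\in X}H_i$. For a state $\rho_X$ with eigenvalues $p_0\ge p_1\ge\cdots$ and $H_X$ with eigenvalues $0=\epsilon_0\le\epsilon_1\le\cdots$, the passive-state energy is $\mathrm{tr}(\rho_X^pH_X)=\sum_jp_j\epsilon_j$. For a pure state $|\psi\rangle$ and $X\subseteq\{A,B,C\}$, $\Delta_{X|X^c}(|\psi\rangle)=\mathrm{tr}(\rho_X^pH_X)+\mathrm{tr}(\rho_{X^c}^pH_{X^c})$ with $\rho_X$ the marginal, and $\Delta=0$ for $X=\emptyset$ or $X=\{A,B,C\}$. Then $M^{(s)}_E(|\psi\rangle)=2^{-3}\sum_{X\subseteq\{A,B,C\}}\Delta_{X|X^c}(|\psi\rangle)$. *)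

(* Defs.v *)
From HB Require Import structures.
From mathcomp Require Import all_boot all_order all_algebra.
Set Implicit Arguments. Unset Strict Implicit. Unset Printing Implicit Defensive.
Import Order.TTheory GRing.Theory Num.Theory.
Local Open Scope ring_scope.

(* Three qubits, labelled A = 0, B = 1, C = 2 (elements of 'I_3).
   A computational-basis configuration is a bit string x : {ffun 'I_3 -> bool}
   (x i = true means qubit i is in |1>).  A pure state is a normalised
   amplitude function psi : {ffun 'I_3 -> bool} -> C, over an algebraically
   closed numeric field C (e.g. the complex numbers). *)

Definition cfg := {ffun 'I_3 -> bool}.

Section Defs.
Variable C : numClosedFieldType.

Definition normalized (psi : cfg -> C) : Prop :=
  \sum_(x : cfg) psi x * (psi x)^* = 1.

(* Configurations of the qubits in X: bit strings vanishing outside X. *)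
Definition cfgOn (X : {set 'I_3}) :=
  {x : cfg | [forall i, (i \notin X) ==> ~~ x i]}.

Definition join (X : {set 'I_3}) (a c : cfg) : cfg :=
  [ffun i => if i \in X then a i else c i].

(* Reduced density matrix rho_X = tr_{X^c} |psi><psi|, indexed by cfgOn X. *)
Definition marginal (psi : cfg -> C) (X : {set 'I_3}) (a b : cfgOn X) : C :=
  \sum_(c : cfgOn (~: X)) psi (join X (val a) (val c))
                        * (psi (join X (val b) (val c)))^*.

(* H_X = sum_{i in X} |1><1|_i : diagonal, entry = number of qubits of X in |1>. *)
Definition hamX (X : {set 'I_3}) (a b : cfgOn X) : C :=
  if a == b then (#|[set i in X | val a i]|)%:R else 0.

Definition toMx (T : finType) (f : T -> T -> C) : 'M[C]_#|T| :=
  \matrix_(i, j) f (enum_val i) (enum_val j).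

Definition eigs n (M : 'M[C]_n) : seq C :=
  projT1 (closed_field_poly_normal (char_poly M)).

(* Passive-state energy tr(rho^p H) = sum_j p_j eps_j with p sorted
   decreasingly and eps sorted increasingly. *)
Definition passiveEnergy n (rho H : 'M[C]_n) : C :=
  \sum_(j < n) (sort (fun x y => y <= x) (eigs rho))`_j
               * (sort (fun x y => x <= y) (eigs H))`_j.

Definition passiveX (psi : cfg -> C) (X : {set 'I_3}) : C :=
  passiveEnergy (toMx (marginal psi (X:=X))) (toMx (@hamX X)).

Definition Delta (psi : cfg -> C) (X : {set 'I_3}) : C :=
  if (X == set0) || (X == setT) then 0
  else passiveX psi X + passiveX psi (~: X).

Definition ME (psi : cfg -> C) : C :=
  (2 ^+ 3)^-1 * \sum_(X : {set 'I_3}) Delta psi X.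

(* psi is a product |phi>_{XY} (x) |chi>_Z across the bipartition {X,Y}|Z,
   where Z = {k}: phi does not depend on qubit k. *)
Definition productAcross (psi : cfg -> C) (k : 'I_3) : Prop :=
  exists (phi : cfg -> C) (chi : bool -> C),
    (forall x y : cfg, (forall i, i != k -> x i = y i) -> phi x = phi y) /\
    forall x : cfg, psi x = phi x * chi (x k).

Definition genuinelyEntangled (psi : cfg -> C) : Prop :=
  forall k : 'I_3, ~ productAcross psi k.

End Defs.

(* Main.v *)
Require Import Defs.
From HB Require Import structures.
From mathcomp Require Import all_boot all_order all_algebra.
From mathcomp Require Import ring.
Set Implicit Arguments. Unset Strict Implicit. Unset Printing Implicit Defensive.
Import Order.TTheory GRing.Theory Num.Theory.
Local Open Scope ring_scope.

Lemma sum_ev (R : nmodType) (T : finType) (F : T -> R) :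
  \sum_(i < #|T|) F (enum_val i) = \sum_(a : T) F a.
Proof. by rewrite -big_enum_val. Qed.

Lemma prod_ev (R : comNzRingType) (T : finType) (F : T -> R) :
  \prod_(i < #|T|) F (enum_val i) = \prod_(a : T) F a.
Proof. by rewrite -big_enum_val. Qed.

Lemma cfgOn_out (X : {set 'I_3}) (a : cfgOn X) i : i \notin X -> val a i = false.
Proof. by move=> hi; have /forallP/(_ i) := valP a; rewrite hi /= => /negbTE. Qed.

Lemma restr_subproof (X : {set 'I_3}) (x : cfg) :
  [forall i, (i \notin X) ==> ~~ [ffun i => (i \in X) && x i] i].
Proof. by apply/forallP => i; apply/implyP => hi; rewrite ffunE (negbTE hi). Qed.

Definition restr (X : {set 'I_3}) (x : cfg) : cfgOn X := exist (fun y : cfg => [forall i, (i \notin X) ==> ~~ y i]) _ (restr_subproof X x).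

Lemma restrE (X : {set 'I_3}) x i : val (restr X x) i = (i \in X) && x i.
Proof. by rewrite /= ffunE. Qed.

Lemma joinE (X : {set 'I_3}) a c i : join X a c i = if i \in X then a i else c i.
Proof. by rewrite ffunE. Qed.

Lemma join_restr (X : {set 'I_3}) x : join X (val (restr X x)) (val (restr (~: X) x)) = x.
Proof.
apply/ffunP => i; rewrite joinE !restrE inE.
by case: (i \in X).
Qed.

Lemma restr_join1 (X : {set 'I_3}) (a : cfgOn X) c : restr X (join X (val a) c) = a.
Proof.
apply: val_inj; apply/ffunP => i; rewrite restrE joinE.
by case: ifP => // hi; rewrite cfgOn_out ?hi.
Qed.

Lemma restr_join2 (X : {set 'I_3}) a (c : cfgOn (~: X)) : restr (~: X) (join X a (val c)) = c.
Proof.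
apply: val_inj; apply/ffunP => i; rewrite restrE joinE inE.
by case: ifP => // hi; rewrite cfgOn_out // inE hi.
Qed.

Lemma sum_join (R : nmodType) (X : {set 'I_3}) (F : cfg -> R) :
  \sum_(a : cfgOn X) \sum_(c : cfgOn (~: X)) F (join X (val a) (val c)) = \sum_x F x.
Proof.
rewrite pair_bigA /=.
pose h (x : cfg) : cfgOn X * cfgOn (~: X) := (restr X x, restr (~: X) x).
have hb : bijective h.
  exists (fun p => join X (val p.1) (val p.2)) => [x|[a c]].
    by rewrite /h /= join_restr.
  by rewrite /h /= restr_join1 restr_join2.
rewrite (reindex h (onW_bij _ hb)) /=.
by apply: eq_bigr => x _; rewrite join_restr.
Qed.

Lemma sylvester (R : comNzRingType) m n (U : 'M[R]_(m, n)) (V : 'M[R]_(n, m)) :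
  'X^n * char_poly (U *m V) = 'X^m * char_poly (V *m U).
Proof.
rewrite /char_poly /char_poly_mx.
set U' := map_mx polyC U; set V' := map_mx polyC V.
have eUV : map_mx polyC (U *m V) = U' *m V' by rewrite map_mxM.
have eVU : map_mx polyC (V *m U) = V' *m U' by rewrite map_mxM.
rewrite eUV eVU.
set M := block_mx ('X%:M : 'M_m) U' V' (1%:M : 'M_n).
have h1 : \det M = \det ('X%:M - U' *m V').
  have -> : M = block_mx 1%:M U' 0 1%:M *m block_mx ('X%:M - U' *m V') 0 V' 1%:M.
    rewrite mulmx_block !mul1mx !mul0mx ?mulmx0 ?mulmx1 ?add0r ?addr0.
    by rewrite subrK.

  by rewrite det_mulmx det_ublock det_lblock !det1 !mul1r mulr1.
have h2 : \det (block_mx 1%:M 0 (- V') ('X%:M : 'M_n) *m M) =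
          'X^m * \det ('X%:M - V' *m U').
  rewrite mulmx_block !mul1mx !mul0mx !mulmx1 !addr0.
  rewrite mulNmx mul_mx_scalar mul_scalar_mx addNr mulNmx addrC.
  by rewrite det_ublock det_scalar.
move: h2; rewrite det_mulmx det_lblock det1 mul1r det_scalar h1 => ->.
by [].
Qed.

Section Spec.
Variable C : numClosedFieldType.
Definition hadj m n (M : 'M[C]_(m,n)) : 'M_(n,m) := map_mx Num.Def.conjC M^T.

Lemma eigsE n (A : 'M[C]_n) : char_poly A = \prod_(z <- eigs A) ('X - z%:P).
Proof.
rewrite /eigs; case: closed_field_poly_normal => rs /= hrs.
by rewrite {1}hrs (monicP (char_poly_monic A)) scale1r.
Qed.

Lemma size_eigs n (A : 'M[C]_n) : size (eigs A) = n.
Proof.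
by have := size_char_poly A; rewrite eigsE size_prod_XsubC => -[].
Qed.

Lemma dotE n (w : 'rV[C]_n) :
  (w *m hadj w) 0 0 = \sum_j w 0 j * (w 0 j)^*.
Proof. by rewrite mxE; apply: eq_bigr => j _; rewrite !mxE. Qed.

Lemma dot_gt0 n (w : 'rV[C]_n) : w != 0 -> 0 < \sum_j w 0 j * (w 0 j)^*.
Proof.
move=> wn0; rewrite lt_def sumr_ge0 ?andbT; last by move=> j _; exact: mul_conjC_ge0.
apply/negP => /eqP hs; move/negP: wn0; apply; apply/eqP/rowP => j; rewrite mxE.
have := @psumr_eq0P _ _ xpredT (fun i => w 0 i * (w 0 i)^*) (fun i _ => mul_conjC_ge0 _) hs j isT.
by move=> /eqP; rewrite mul_conjC_eq0 => /eqP.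
Qed.

Lemma hadjM m n p (A : 'M[C]_(m,n)) (B : 'M[C]_(n,p)) :
  hadj (A *m B) = hadj B *m hadj A.
Proof. by rewrite /hadj trmx_mul map_mxM. Qed.

Lemma eigs_nneg m n (P : 'M[C]_(m,n)) r : r \in eigs (P *m hadj P) -> 0 <= r.
Proof.
move=> hr.
have : eigenvalue (P *m hadj P) r by rewrite eigenvalue_root_char eigsE root_prod_XsubC.
case/eigenvalueP => v hv vn0.
have e : (v *m P) *m hadj (v *m P) = r *: (v *m hadj v).
  by rewrite hadjM !mulmxA -(mulmxA v) hv scalemxAl.
have := congr1 (fun M : 'M[C]_1 => M 0 0) e; rewrite /= dotE [X in _ = X]mxE dotE => eq.
have hs := dot_gt0 vn0.
have -> : r = (\sum_j (v *m P) 0 j * ((v *m P) 0 j)^*) / \sum_j v 0 j * (v 0 j)^*.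
  by rewrite eq mulfK // gt_eqF.
apply: divr_ge0; last exact: ltW.
by apply: sumr_ge0 => j _; exact: mul_conjC_ge0.
Qed.

Lemma sort_perm_real (leT : rel C) (s t : seq C) :
  (forall x y, x \is Num.real -> y \is Num.real -> leT x y || leT y x) ->
  transitive leT -> antisymmetric leT ->
  perm_eq s t -> all (fun x => x \is Num.real) t -> sorted leT t -> sort leT s = t.
Proof.
move=> tot tr anti pst rt st.
have rs : {in s, forall x, x \is Num.real}.
  by move=> x; rewrite (perm_mem pst) => xt; move/allP: rt; apply.
have -> : sort leT s = sort leT t.
  apply/perm_sort_inP => //.
  - by move=> x y xs ys; apply: tot; apply: rs.
  - by move=> x y z _ _ _; apply: tr.
  - by move=> x y _ _; apply: anti.
exact: sorted_sort.
Qed.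

Lemma sort_ge s t : perm_eq s t -> all (fun x : C => x \is Num.real) t ->
  sorted (fun x y : C => y <= x) t -> sort (fun x y : C => y <= x) s = t.
Proof.
apply: sort_perm_real.
- by move=> x y rx ry; rewrite orbC; exact: real_leVge.
- by move=> x y z /= h1 h2; exact: le_trans h2 h1.
- by move=> x y /= h; apply/le_anti; rewrite andbC.
Qed.

Lemma sort_le s t : perm_eq s t -> all (fun x : C => x \is Num.real) t ->
  sorted (fun x y : C => x <= y) t -> sort (fun x y : C => x <= y) s = t.
Proof.
apply: sort_perm_real.
- by move=> x y rx ry; exact: real_leVge.
- by move=> x y z /= h1 h2; exact: le_trans h1 h2.
- by move=> x y /= h; apply/le_anti.
Qed.


Lemma quadE (a b : C) : ('X - a%:P) * ('X - b%:P) = 'X^2 - (a + b)%:P * 'X + (a * b)%:P.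
Proof. rewrite polyCD polyCM expr2; ring. Qed.

Lemma single_spec n (P : 'M[C]_(2,n)) : \tr (P *m hadj P) = 1 ->
  exists r1 r2, [/\ 0 <= r2, r2 <= r1, r1 + r2 = 1 &
    char_poly (P *m hadj P) = ('X - r1%:P) * ('X - r2%:P)].
Proof.
move=> tr1.
have hs := size_eigs (P *m hadj P).
have hE := eigsE (P *m hadj P).
have hn := @eigs_nneg _ _ P.
case E : (eigs (P *m hadj P)) hs hE hn => [|a [|b [|c l]]] // _.
rewrite !big_cons big_nil mulr1 => hcp hn.
have a0 : 0 <= a by apply: hn; rewrite mem_head.
have b0 : 0 <= b by apply: hn; rewrite !inE eqxx orbT.
have hab : a + b = 1.
  have := char_poly_trace (P *m hadj P) (isT : (0 < 2)%N).
  rewrite hcp quadE tr1 /= !coefE /=.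
  by rewrite add0r addr0 mulr1 => /oppr_inj.
case/orP: (real_leVge (ger0_real a0) (ger0_real b0)) => [ba|ab].
  by exists b, a; split => //; [rewrite addrC | rewrite mulrC].
by exists a, b.
Qed.

Lemma conj_mxK m n (M : 'M[C]_(m,n)) : map_mx Num.Def.conjC (map_mx Num.Def.conjC M) = M.
Proof. by apply/matrixP => i j; rewrite !mxE conjCK. Qed.

Lemma pair_spec (P : 'M[C]_(2,4)) r1 r2 : r1 \is Num.real -> r2 \is Num.real ->
  char_poly (P *m hadj P) = ('X - r1%:P) * ('X - r2%:P) ->
  char_poly (P^T *m hadj P^T) = \prod_(z <- [:: r1; r2; 0; 0]) ('X - z%:P).
Proof.
move=> r1r r2r hcp.
have := sylvester (P^T) (hadj P^T).
have -> : hadj P^T *m P^T = map_mx Num.Def.conjC (P *m hadj P).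
  by rewrite map_mxM /hadj conj_mxK trmxK.
rewrite -map_char_poly hcp rmorphM /= !map_polyXsubC /= !conj_Creal //.
rewrite (exprD _ 2 2) -mulrA => /(mulfI (monic_neq0 (monicXn _ 2))) ->.
by rewrite !big_cons big_nil !subr0 mulr1 expr2; ring.
Qed.

End Spec.


Section Ham.
Variable C : numClosedFieldType.

Lemma ham_perm (X : {set 'I_3}) :
  perm_eq (eigs (toMx (hamX C (X:=X))))
          (map (fun a : cfgOn X => (#|[set i in X | val a i]|)%:R) (enum {: cfgOn X})).
Proof.
apply: prod_XsubC_eq; rewrite -eigsE char_poly_trig; last first.
  apply/is_trig_mxP => i j hij; rewrite mxE /hamX (inj_eq enum_val_inj).
  by case: eqP => // e; rewrite e ltnn in hij.
rewrite big_map big_enum /=.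
rewrite [RHS]big_enum_val /=; apply: eq_bigr => i _.
by rewrite mxE /hamX eqxx.
Qed.


Lemma count_single (i : 'I_3) (a : cfgOn [set i]) :
  #|[set i' in [set i] | val a i']| = nat_of_bool (val a i).
Proof.
case h: (val a i).
  have -> : [set i' in [set i] | val a i'] = [set i].
    by apply/setP => x; rewrite !inE; case: eqP => // ->.
  by rewrite cards1.
have -> : [set i' in [set i] | val a i'] = set0.
  by apply/setP => x; rewrite !inE; case: eqP => // ->; rewrite h.
by rewrite cards0.
Qed.

Lemma perm_single (i : 'I_3) :
  perm_eq (map (fun a : cfgOn [set i] => val a i) (enum {: cfgOn [set i]})) [:: false; true].
Proof.
apply: uniq_perm => //.
  rewrite map_inj_uniq ?enum_uniq // => a a' e; apply: val_inj; apply/ffunP => x.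
  case: (x =P i) => [->//|/eqP hx].
  by rewrite !cfgOn_out // inE.
move=> b; have -> : b \in [:: false; true] by case: b.
apply/mapP.
exists (restr [set i] [ffun=> b]); first by rewrite mem_enum.
by rewrite restrE inE eqxx ffunE; case: b.
Qed.

Lemma card_single (i : 'I_3) : #|{: cfgOn [set i]}| = 2%N.
Proof. by rewrite cardE -(size_map (fun a : cfgOn [set i] => val a i)) (perm_size (perm_single i)). Qed.

Lemma nat_single (i : 'I_3) :
  perm_eq (map (fun a : cfgOn [set i] => #|[set i' in [set i] | val a i']|) (enum {: cfgOn [set i]})) [:: 0%N; 1%N].
Proof.
rewrite (eq_map (@count_single i)) (map_comp nat_of_bool (fun a : cfgOn [set i] => val a i)).
by have := perm_map nat_of_bool (perm_single i).
Qed.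

Section Pair.
Variables (j k : 'I_3).
Hypothesis jk : j != k.

Lemma count_pair (a : cfgOn [set j; k]) :
  #|[set i' in [set j; k] | val a i']| = (nat_of_bool (val a j) + nat_of_bool (val a k))%N.
Proof.
have kj : (k == j) = false by rewrite eq_sym (negbTE jk).
have jk' : (j == k) = false by rewrite (negbTE jk).
case hj: (val a j); case hk: (val a k).
- have -> : [set i' in [set j; k] | val a i'] = [set j; k] by (apply/setP => x; rewrite !inE; have [->|xj] := eqVneq x j;
    [rewrite ?eqxx ?hj ?hk ?kj ?jk' // |
     have [->|xk] := eqVneq x k; rewrite ?eqxx ?hj ?hk ?kj ?jk' ?(negbTE xj) ?(negbTE xk) //]).
  by rewrite cards2 jk.
- have -> : [set i' in [set j; k] | val a i'] = [set j] by (apply/setP => x; rewrite !inE; have [->|xj] := eqVneq x j;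
    [rewrite ?eqxx ?hj ?hk ?kj ?jk' // |
     have [->|xk] := eqVneq x k; rewrite ?eqxx ?hj ?hk ?kj ?jk' ?(negbTE xj) ?(negbTE xk) //]).
  by rewrite cards1.
- have -> : [set i' in [set j; k] | val a i'] = [set k] by (apply/setP => x; rewrite !inE; have [->|xj] := eqVneq x j;
    [rewrite ?eqxx ?hj ?hk ?kj ?jk' // |
     have [->|xk] := eqVneq x k; rewrite ?eqxx ?hj ?hk ?kj ?jk' ?(negbTE xj) ?(negbTE xk) //]).
  by rewrite cards1.
- have -> : [set i' in [set j; k] | val a i'] = set0 by (apply/setP => x; rewrite !inE; have [->|xj] := eqVneq x j;
    [rewrite ?eqxx ?hj ?hk ?kj ?jk' // |
     have [->|xk] := eqVneq x k; rewrite ?eqxx ?hj ?hk ?kj ?jk' ?(negbTE xj) ?(negbTE xk) //]).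
  by rewrite cards0.
Qed.

Lemma perm_pair :
  perm_eq (map (fun a : cfgOn [set j; k] => (val a j, val a k)) (enum {: cfgOn [set j; k]}))
     [:: (false, false); (false, true); (true, false); (true, true)].
Proof.
apply: uniq_perm => //.
  rewrite map_inj_uniq ?enum_uniq // => a a' [e1 e2]; apply: val_inj; apply/ffunP => x.
  case: (x =P j) => [->//|/eqP hx]; case: (x =P k) => [->//|/eqP hx'].
  by rewrite !cfgOn_out // !inE negb_or hx hx'.
move=> [b1 b2]; have -> : (b1, b2) \in [:: (false, false); (false, true); (true, false); (true, true)] by case: b1; case: b2.
apply/mapP.
exists (restr [set j; k] [ffun x => if x == j then b1 else b2]); first by rewrite mem_enum.
rewrite !restrE !inE !eqxx !ffunE eqxx /= orbT.
by rewrite eq_sym (negbTE jk); case: b1; case: b2.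
Qed.

Lemma card_pair : #|{: cfgOn [set j; k]}| = 4%N.
Proof. by rewrite cardE -(size_map (fun a : cfgOn [set j; k] => (val a j, val a k))) (perm_size perm_pair). Qed.

Lemma nat_pair :
  perm_eq (map (fun a : cfgOn [set j; k] => #|[set i' in [set j; k] | val a i']|) (enum {: cfgOn [set j; k]})) [:: 0%N; 1%N; 1%N; 2%N].
Proof.
rewrite (eq_map count_pair).
rewrite (map_comp (fun p : bool * bool => (nat_of_bool p.1 + nat_of_bool p.2)%N) (fun a : cfgOn [set j; k] => (val a j, val a k))).
by have := perm_map (fun p : bool * bool => (nat_of_bool p.1 + nat_of_bool p.2)%N) perm_pair.
Qed.

End Pair.
End Ham.


Section Main.
Variable C : numClosedFieldType.

Lemma ham_sort_single (i : 'I_3) :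
  sort (fun x y : C => x <= y) (eigs (toMx (hamX C (X:=[set i])))) = [:: 0; 1].
Proof.
apply: sort_le => /=; last by rewrite ler01.
  apply: (perm_trans (ham_perm C [set i])).
  rewrite (map_comp (fun n : nat => n%:R : C) (fun a : cfgOn [set i] => #|[set i' in [set i] | val a i']|)).
  by have := perm_map (fun n : nat => n%:R : C) (nat_single i).
by rewrite real0 real1.
Qed.

Lemma ham_sort_pair (j k : 'I_3) : j != k ->
  sort (fun x y : C => x <= y) (eigs (toMx (hamX C (X:=[set j; k])))) = [:: 0; 1; 1; 2].
Proof.
move=> jk; apply: sort_le => /=; last by rewrite ler01 lexx ler1n.
  apply: (perm_trans (ham_perm C [set j; k])).
  rewrite (map_comp (fun n : nat => n%:R : C) (fun a : cfgOn [set j; k] => #|[set i' in [set j; k] | val a i']|)).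
  by have := perm_map (fun n : nat => n%:R : C) (nat_pair jk).
by rewrite real0 real1 realn.
Qed.

Lemma passive2 n (rho H : 'M[C]_n) r1 r2 : n = 2%N -> 0 <= r2 -> r2 <= r1 ->
  char_poly rho = ('X - r1%:P) * ('X - r2%:P) ->
  sort (fun x y : C => x <= y) (eigs H) = [:: 0; 1] -> passiveEnergy rho H = r2.
Proof.
move=> hn; subst n => r20 r21 hcp hH.
have hs : sort (fun x y : C => y <= x) (eigs rho) = [:: r1; r2].
  apply: sort_ge => /=.
  - by apply: prod_XsubC_eq; rewrite -eigsE hcp !big_cons big_nil mulr1.
  - by rewrite (ger0_real r20) (ger0_real (le_trans r20 r21)).
  - by rewrite r21.
rewrite /passiveEnergy hH hs !big_ord_recl big_ord0 /=.
by rewrite mulr0 mulr1 add0r addr0.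
Qed.

Lemma passive4 n (rho H : 'M[C]_n) r1 r2 : n = 4%N -> 0 <= r2 -> r2 <= r1 ->
  char_poly rho = \prod_(z <- [:: r1; r2; 0; 0]) ('X - z%:P) ->
  sort (fun x y : C => x <= y) (eigs H) = [:: 0; 1; 1; 2] -> passiveEnergy rho H = r2.
Proof.
move=> hn; subst n => r20 r21 hcp hH.
have hs : sort (fun x y : C => y <= x) (eigs rho) = [:: r1; r2; 0; 0].
  apply: sort_ge => /=.
  - by apply: prod_XsubC_eq; rewrite -eigsE hcp.
  - by rewrite (ger0_real r20) (ger0_real (le_trans r20 r21)) real0.
  - by rewrite r21 r20 lexx.
rewrite /passiveEnergy hH hs !big_ord_recl big_ord0 /=.
by rewrite mulr0 mulr1 !mul0r add0r !addr0.
Qed.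

End Main.


Section Psi.
Variable C : numClosedFieldType.
Variable psi : cfg -> C.

Definition PX (X : {set 'I_3}) : 'M[C]_(#|{: cfgOn X}|, #|{: cfgOn (~: X)}|) :=
  \matrix_(i, j) psi (join X (val (enum_val i)) (val (enum_val j))).

Lemma rhoE (X : {set 'I_3}) : toMx (marginal psi (X:=X)) = PX X *m hadj (PX X).
Proof.
apply/matrixP => i j; rewrite !mxE /marginal -[LHS]sum_ev.
by apply: eq_bigr => l _; rewrite !mxE.
Qed.

Lemma sum_eqset (Y Z : {set 'I_3}) (F : cfg -> C) : Y = Z ->
  \sum_(c : cfgOn Y) F (val c) = \sum_(c : cfgOn Z) F (val c).
Proof. by move->. Qed.

Lemma joinC (X : {set 'I_3}) a c : join (~: X) a c = join X c a.
Proof. by apply/ffunP => i; rewrite !joinE inE; case: (i \in X). Qed.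

Lemma rhocE (X : {set 'I_3}) :
  toMx (marginal psi (X:=~: X)) = (PX X)^T *m hadj (PX X)^T.
Proof.
apply/matrixP => i j; rewrite !mxE /marginal.
rewrite (@sum_eqset _ X (fun c => psi (join (~: X) (val (enum_val i)) c) *
    (psi (join (~: X) (val (enum_val j)) c))^*)) ?setCK //.
rewrite -[LHS]sum_ev.
by apply: eq_bigr => l _; rewrite !mxE !joinC.
Qed.

Lemma trace1 (X : {set 'I_3}) : normalized psi -> \tr (PX X *m hadj (PX X)) = 1.
Proof.
move=> hn; rewrite -hn -(sum_join X (fun x => psi x * (psi x)^*)).
rewrite /mxtrace [RHS]big_enum_val /=; apply: eq_bigr => a _.
rewrite mxE [RHS]big_enum_val /=; apply: eq_bigr => c _.
by rewrite !mxE.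
Qed.


Lemma single_spec' m n (P : 'M[C]_(m,n)) : m = 2%N -> \tr (P *m hadj P) = 1 ->
  exists r1 r2, [/\ 0 <= r2, r2 <= r1, r1 + r2 = 1 &
    char_poly (P *m hadj P) = ('X - r1%:P) * ('X - r2%:P)].
Proof. by move=> hm; subst m; apply: single_spec. Qed.

Lemma pair_spec' m n (P : 'M[C]_(m,n)) r1 r2 : m = 2%N -> n = 4%N ->
  r1 \is Num.real -> r2 \is Num.real ->
  char_poly (P *m hadj P) = ('X - r1%:P) * ('X - r2%:P) ->
  char_poly (P^T *m hadj P^T) = \prod_(z <- [:: r1; r2; 0; 0]) ('X - z%:P).
Proof. by move=> hm hn; subst m n; apply: pair_spec. Qed.

Lemma compl_single (i : 'I_3) : exists j k : 'I_3, j != k /\ ~: [set i] = [set j; k].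
Proof.
have : #|~: [set i]| == 2%N by rewrite cardsC1 card_ord.
by case/cards2P => j [k [jk e]]; exists j, k.
Qed.

Lemma det_rank m (A : 'M[C]_m) : (\rank A < m)%N -> \det A = 0.
Proof.
move=> hr; apply/eqP; apply/negPn/negP => hd.
have : A \in unitmx by rewrite unitmxE unitfE.
by rewrite -row_free_unit /row_free => /eqP e; rewrite e ltnn in hr.
Qed.

Lemma single_passive (i : 'I_3) : normalized psi ->
  exists r, [/\ 0 <= r, r <= 2^-1, passiveX psi [set i] = r,
     passiveX psi (~: [set i]) = r &
     (\det (toMx (marginal psi (X:=[set i]))) = 0 -> r = 0)].
Proof.
move=> hn.
have [j [k [jk e]]] := compl_single i.
have hm : #|{: cfgOn [set i]}| = 2%N by apply: card_single.
have hc : #|{: cfgOn (~: [set i])}| = 4%N by rewrite e; apply: card_pair.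
have hHc : sort (fun x y : C => x <= y) (eigs (toMx (hamX C (X:=~: [set i])))) = [:: 0; 1; 1; 2].
  by rewrite e; apply: ham_sort_pair.
have [r1 [r2 [r20 r21 hsum hcp]]] := single_spec' hm (trace1 [set i] hn).
have r1r : r1 \is Num.real by apply: ger0_real; apply: le_trans r20 r21.
have r2r : r2 \is Num.real by apply: ger0_real.
exists r2; split => //.
- have h2 : r2 + r2 <= 1 by rewrite -hsum lerD2r.
  rewrite -[2^-1]mul1r ler_pdivlMr ?ltr0n // mulr_natr mulr2n //.
- by rewrite /passiveX rhoE; apply: (passive2 hm) r20 r21 hcp (ham_sort_single C i).
- rewrite /passiveX rhocE; apply: (passive4 hc) r20 r21 _ hHc.
  exact: pair_spec' hm hc r1r r2r hcp.
- rewrite rhoE => hd.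
  have := char_poly_det (PX [set i] *m hadj (PX [set i])).
  rewrite hd mulr0 hcp quadE !coefE /= mulr0 subr0 add0r => /eqP; rewrite mulf_eq0.
  case/orP => /eqP h; last by [].
  by apply/le_anti; rewrite r20 -h r21.
Qed.


Lemma prod_det (k : 'I_3) : productAcross psi k ->
  \det (toMx (marginal psi (X:=[set k]))) = 0.
Proof.
case=> phi [chi [hphi hpsi]].
rewrite rhoE.
pose z0 := restr [set k] [ffun=> false].
pose u : 'M[C]_(#|{: cfgOn [set k]}|, 1) := \matrix_(i, j) chi (val (enum_val (i : 'I_#|{: cfgOn [set k]}|)) k).
pose v : 'M[C]_(1, #|{: cfgOn (~: [set k])}|) :=
  \matrix_(i, j) phi (join [set k] (val z0) (val (enum_val (j : 'I_#|{: cfgOn (~: [set k])}|)))).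
have hP : PX [set k] = u *m v.
  apply/matrixP => i j; rewrite !mxE big_ord1 !mxE hpsi joinE set11 mulrC.
  congr (_ * _); apply: hphi => i' hi'.
  by rewrite !joinE inE (negbTE hi').
apply: det_rank; rewrite hP.
apply: (leq_ltn_trans (mxrankM_maxl _ _)).
apply: (leq_ltn_trans (mxrankM_maxl _ _)).
by apply: (leq_ltn_trans (rank_leq_col u)); rewrite card_single.
Qed.

End Psi.


Lemma card_eq_single (X : {set 'I_3}) i : X == [set i] -> #|X| = 1%N.
Proof. by move/eqP->; rewrite cards1. Qed.

Lemma card_eq_compl (X : {set 'I_3}) i : X == ~: [set i] -> #|X| = 2%N.
Proof. by move/eqP->; rewrite cardsC1 card_ord. Qed.

Lemma sum_ind (C : numClosedFieldType) (A : {set 'I_3}) (c : C) :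
  \sum_(X : {set 'I_3}) (X == A)%:R * c = c.
Proof.
rewrite (bigD1 A) //= eqxx mul1r big1 ?addr0 // => X /negbTE ->.
by rewrite mul0r.
Qed.

Lemma sum_ind_i (C : numClosedFieldType) (i0 : 'I_3) (c : 'I_3 -> C) :
  \sum_(i : 'I_3) (i0 == i)%:R * c i = c i0.
Proof.
rewrite (bigD1 i0) //= eqxx mul1r big1 ?addr0 // => i hi.
by rewrite eq_sym (negbTE hi) mul0r.
Qed.

Section Final.
Variable C : numClosedFieldType.
Variable psi : cfg -> C.
Variable lam : 'I_3 -> C.
Hypothesis hlam : forall i, passiveX psi [set i] = lam i /\ passiveX psi (~: [set i]) = lam i.

Lemma Delta_E (X : {set 'I_3}) :
  Delta psi X = \sum_i ((X == [set i])%:R + (X == ~: [set i])%:R) * (lam i + lam i).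
Proof.
have hX : (#|X| <= 3)%N by have := max_card (mem X); rewrite card_ord.
have [h0|h0] := eqVneq #|X| 0%N.
  have -> : X = set0 by apply: cards0_eq.
  rewrite /Delta eqxx /= big1 // => i _.
  case: eqP => [e|_]; first by have := cards1 i; rewrite -e cards0.
  case: eqP => [e|_]; first by have := cardsC1 i; rewrite -e cards0 card_ord.
  by rewrite add0r mul0r.
have [h3|h3] := eqVneq #|X| 3%N.
  have eT : X = setT by apply/eqP; rewrite eqEcard subsetT cardsT card_ord h3.
  rewrite /Delta eT eqxx orbT big1 // => i _.
  case: eqP => [e|_]; first by have := cards1 i; rewrite -e cardsT card_ord.
  case: eqP => [e|_]; first by have := cardsC1 i; rewrite -e cardsT card_ord.
  by rewrite add0r mul0r.
have hX0 : (X == set0) = false by apply/negbTE; apply: contra_neq h0 => ->; rewrite cards0.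
have hXT : (X == setT) = false.
  by apply/negbTE; apply: contra_neq h3 => ->; rewrite cardsT card_ord.
rewrite /Delta hX0 hXT /=.
have [h1|h1] := eqVneq #|X| 1%N.
  have [i0 ->] := cards1P (introT eqP h1).
  have [p1 p2] := hlam i0.
  rewrite p1 p2 -(sum_ind_i i0 (fun i => lam i + lam i)).
  apply: eq_bigr => i _; rewrite (inj_eq set1_inj).
  have -> : ([set i0] == ~: [set i]) = false.
    by apply/negbTE/negP => e; have := card_eq_compl e; rewrite cards1.
  by rewrite addr0.
have h2 : #|~: X| == 1%N.
  have e := cardsC X; rewrite card_ord in e.
  apply/eqP; move: hX h0 h3 h1 e; case: #|X| => [|[|[|[|n]]]] //= _ _ _ _.
  by rewrite add2n => -[].
have [i0 eC] := cards1P h2.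
have -> : X = ~: [set i0] by rewrite -eC setCK.
have [p1 p2] := hlam i0.
rewrite setCK p1 p2 addrC -(sum_ind_i i0 (fun i => lam i + lam i)).
apply: eq_bigr => i _; rewrite (inj_eq (@setC_inj _)) (inj_eq set1_inj).
have -> : (~: [set i0] == [set i]) = false.
  by apply/negbTE/negP => e; have := card_eq_single e; rewrite cardsC1 card_ord.
by rewrite add0r.
Qed.

End Final.

Lemma sum_pairs (C : numClosedFieldType) (i : 'I_3) (c : C) :
  \sum_(X : {set 'I_3}) ((X == [set i])%:R + (X == ~: [set i])%:R) * c = c + c.
Proof. by rewrite (eq_bigr _ (fun X _ => mulrDl _ _ c)) big_split /= !sum_ind. Qed.

Unset Implicit Arguments.

Theorem mainTheorem5 (C : numClosedFieldType) (psi : cfg -> C) :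
  normalized psi -> 2^-1 < ME psi -> genuinelyEntangled psi.
Proof.
move=> hn hlt k hk.
pose lam i := passiveX psi [set i].
have hl : forall i, passiveX psi [set i] = lam i /\ passiveX psi (~: [set i]) = lam i.
  by move=> i; have [r [_ _ p1 p2 _]] := single_passive i hn; rewrite /lam p1 p2.
have hb : forall i, lam i <= 2^-1.
  by move=> i; have [r [_ h p1 _ _]] := single_passive i hn; rewrite /lam p1.
have hk0 : lam k = 0.
  have [r [_ _ p1 _ hd]] := single_passive k hn; rewrite /lam p1; apply: hd.
  exact: prod_det.
have hME : ME psi <= 2^-1.
  rewrite /ME (eq_bigr _ (fun X _ => Delta_E hl X)) exchange_big /=.
  rewrite (eq_bigr _ (fun i _ => sum_pairs i (lam i + lam i))).
  rewrite (bigD1 k) //= hk0 !addr0 add0r.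
  have h2 : \sum_(i | i != k) (lam i + lam i + (lam i + lam i)) <= \sum_(i | i != k) (2 : C).
    apply: ler_sum => i _.
    have -> : (2 : C) = 2^-1 + 2^-1 + (2^-1 + 2^-1) by field.
    by apply: lerD; apply: lerD.
  apply: le_trans (ler_wpM2l _ h2) _.
    by rewrite invr_ge0 exprn_ge0 // ler0n.
  rewrite sumr_const cardC1 card_ord /=.
  have -> : ((2 : C) ^+ 3)^-1 * (2 *+ 2) = 2^-1 by rewrite mulr2n; field.
  by [].
by move: hlt; rewrite (le_gtF hME).
Qed.
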